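(* Let $F$ be a signature on a finite set $V$ that is not logsupermodular, but such that every pinning $F_p$ with $\mathrm{dom}(p)\ne\emptyset$ is logsupermodular. Then there is a configuration $x$ such that $\mathrm{supp}(F)\subseteq\{\mathbf 0,x,\overline{x},\mathbf 1\}$.
   Context: A signature on $V$ is a function $F:\{0,1\}^V\to\mathbb{R}_{\ge0}$; $\mathrm{supp}(F)=\{x:F(x)\ne0\}$. $F$ is logsupermodular if $F(x\wedge y)F(x\vee y)\ge F(x)F(y)$ for all $x,y\in\{0,1\}^V$, where $\wedge,\vee$ are coordinatewise min and max. A partial configuration $p$ is an element of $\{0,1\}^{\mathrm{dom}(p)}$, $\mathrm{dom}(p)\subseteq V$, and the pinning $F_p$ on $V\setminus\mathrm{dom}(p)$ is $F_p(x)=F(x,p)$. $\mathbf 0,\mathbf 1$ are the all-zero and all-one configurations; $\overline{x}_i=1-x_i$. *)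

(* Defs.v *)
From HB Require Import structures.
From mathcomp Require Import all_boot all_order all_algebra.
Set Implicit Arguments. Unset Strict Implicit. Unset Printing Implicit Defensive.
Import Order.TTheory GRing.Theory Num.Theory.
Local Open Scope ring_scope.

Definition cfg (W : finType) := {ffun W -> bool}.

Definition cmeet (W : finType) (x y : cfg W) : cfg W := [ffun i => x i && y i].
Definition cjoin (W : finType) (x y : cfg W) : cfg W := [ffun i => x i || y i].
Definition ccompl (W : finType) (x : cfg W) : cfg W := [ffun i => ~~ x i].
Definition czero (W : finType) : cfg W := [ffun => false].
Definition cone (W : finType) : cfg W := [ffun => true].

Definition signature (R : realFieldType) (W : finType) (F : cfg W -> R) :=
  forall x, 0 <= F x.

Definition logsupermodular (R : realFieldType) (W : finType) (F : cfg W -> R) :=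
  forall x y : cfg W, F x * F y <= F (cmeet x y) * F (cjoin x y).

(* Partial configuration with domain D : values p on the elements of D. *)
Notation dom_t D := {v | v \in D}.
Notation cod_t D := {v | v \notin D}.

Definition glue (V : finType) (D : {set V})
  (p : cfg (dom_t D)) (y : cfg (cod_t D)) : cfg V :=
  [ffun v => match boolP (v \in D) with
             | AltTrue h => p (exist _ v h)
             | AltFalse h => y (exist _ v h)
             end].

Definition pinning (R : realFieldType) (V : finType) (F : cfg V -> R)
  (D : {set V}) (p : cfg (dom_t D)) : cfg (cod_t D) -> R :=
  fun y => F (glue p y).

(* Main.v *)
Require Import Defs.
From HB Require Import structures.
From mathcomp Require Import all_boot all_order all_algebra.
From mathcomp Require Import ring lra.
Import Order.TTheory GRing.Theory Num.Theory.
Local Open Scope ring_scope.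

Lemma glue_eq (V : finType) (D : {set V}) (p : cfg (dom_t D)) (y : cfg (cod_t D)) i (b : bool) :
  (forall h, p (exist _ i h) = b) -> (forall h, y (exist _ i h) = b) -> glue p y i = b.
Proof. move=> H1 H2; rewrite ffunE. destruct (boolP (i \in D)) as [h|h]; [apply: H1|apply: H2]. Qed.

Lemma pair_lsm (R : realFieldType) (V : finType) (F : cfg V -> R) :
  (forall (D : {set V}) (p : cfg (dom_t D)),
      D != set0 -> logsupermodular (pinning F p)) ->
  forall (u w : cfg V) (v : V), u v = w v ->
  F u * F w <= F (cmeet u w) * F (cjoin u w).
Proof.
move=> Hpin u w v huw.
set D := [set v].
have nD : D != set0 by apply/set0Pn; exists v; rewrite set11.
pose p : cfg (dom_t D) := [ffun _ => u v].
pose r (t : cfg V) : cfg (cod_t D) := [ffun i => t (val i)].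
have gl (t : cfg V) : t v = u v -> glue p (r t) = t.
  move=> ht; apply/ffunP=> i; apply: glue_eq => h.
    by rewrite ffunE; move: (h); rewrite inE => /eqP ->; rewrite ht.
  by rewrite ffunE.
have := Hpin D p nD (r u) (r w); rewrite /pinning.
have -> : cmeet (r u) (r w) = r (cmeet u w) by apply/ffunP=> i; rewrite !ffunE.
have -> : cjoin (r u) (r w) = r (cjoin u w) by apply/ffunP=> i; rewrite !ffunE.
rewrite !gl // ?ffunE -?huw ?andbb ?orbb //.
Qed.

Lemma neq_compl (V : finType) (u w : cfg V) :
  u != ccompl w -> exists v, u v = w v.
Proof.
move=> H; case: (boolP [exists v, u v == w v]) => [/existsP [v /eqP] | ]; first by eauto.
rewrite negb_exists => /forallP Hv; case/eqP: H; apply/ffunP=> v; rewrite ffunE.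
by move: (Hv v); case: (u v); case: (w v).
Qed.

Lemma ccomplK (V : finType) (x : cfg V) : ccompl (ccompl x) = x.
Proof. by apply/ffunP=> v; rewrite !ffunE negbK. Qed.

Lemma key (R : realFieldType) (V : finType) (F : cfg V -> R) :
  signature F ->
  (forall (D : {set V}) (p : cfg (dom_t D)),
      D != set0 -> logsupermodular (pinning F p)) ->
  forall x z : cfg V,
  F (czero V) * F (cone V) < F x * F (ccompl x) ->
  0 < F z -> cmeet z x != czero V -> cmeet z x != x -> False.
Proof.
move=> HF Hpin x z Hx Hz ha0 hax.
set a := cmeet z x.
have Fx : 0 < F x * F (ccompl x).
  by apply: le_lt_trans Hx; apply: mulr_ge0.
have Fx1 : 0 < F x.
  by rewrite lt0r HF andbT; apply/eqP=> e; move: Fx; rewrite e mul0r ltxx.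
have Fx2 : 0 < F (ccompl x).
  by rewrite lt0r HF andbT; apply/eqP=> e; move: Fx; rewrite e mulr0 ltxx.
have [v0 hv0] : exists v, a v.
  case: (boolP [exists v, a v]) => [/existsP [v hv] | ]; first by eauto.
  rewrite negb_exists => /forallP Hv; case/eqP: ha0; apply/ffunP=> v.
  by rewrite [RHS]ffunE; apply/negbTE.
have hzx : z != ccompl x.
  apply/eqP=> e; move: hv0; rewrite /a e !ffunE; by case: (x v0).
have hzx' : z != ccompl (ccompl x).
  rewrite ccomplK; apply/eqP=> e; case/eqP: hax; rewrite /a e.
  by apply/ffunP=> v; rewrite !ffunE andbb.
have [v1 h1] := neq_compl _ _ _ hzx.
have [v2 h2] := neq_compl _ _ _ hzx'.
have I1 := pair_lsm _ _ _ Hpin _ _ _ h1.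
have I2 := pair_lsm _ _ _ Hpin _ _ _ h2.
set J := cjoin (ccompl x) a.
have eJ : cjoin z (ccompl x) = J.
  by apply/ffunP=> v; rewrite /J /a !ffunE; case: (z v); case: (x v).
rewrite eJ in I2.
have hv0' : x v0 = J v0.
  move: hv0; rewrite /J /a !ffunE; by case: (z v0); case: (x v0).
have I3 := pair_lsm _ _ _ Hpin _ _ _ hv0'.
have e3 : cmeet x J = a.
  by apply/ffunP=> v; rewrite /J /a !ffunE; case: (z v); case: (x v).
have e3' : cjoin x J = cone V.
  by apply/ffunP=> v; rewrite /J /a !ffunE; case: (z v); case: (x v).
rewrite e3 e3' in I3.
have hax' : a != ccompl (ccompl x) by rewrite ccomplK.
have [v4 h4] := neq_compl _ _ _ hax'.
have I4 := pair_lsm _ _ _ Hpin _ _ _ h4.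
have e4 : cmeet a (ccompl x) = czero V.
  by apply/ffunP=> v; rewrite /a !ffunE; case: (z v); case: (x v).
have e4' : cjoin a (ccompl x) = J.
  by apply/ffunP=> v; rewrite /J /a !ffunE; case: (z v); case: (x v).
rewrite e4 e4' in I4.
have := HF a; have := HF J; have := HF (cmeet z x); have := HF (cjoin z x);
have := HF (cmeet z (ccompl x)); have := HF (czero V); have := HF (cone V).
move: I1 I2 I3 I4 Hx Hz Fx1 Fx2.
set fa := F a; set fJ := F J; set f0 := F (czero V); set f1 := F (cone V).
set fx := F x; set fnx := F (ccompl x); set fz := F z.
set m1 := F (cjoin z x); set b := F (cmeet z (ccompl x)).
rewrite -/a -/fa.
move=> I1 I2 I3 I4 Hx Hz Fx1 Fx2 h1' h0' hb hm1 ha' hJ ha''.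
have Fa : 0 < fa by nra.
have FJ : 0 < fJ by nra.
have : fx * fnx * (fa * fJ) <= f0 * f1 * (fa * fJ).
  have H := ler_pM (mulr_ge0 (ltW Fx1) (ltW FJ)) (mulr_ge0 (ltW Fa) (ltW Fx2)) I3 I4.
  have E1 : fx * fnx * (fa * fJ) = fx * fJ * (fa * fnx) by ring.
  have E2 : f0 * f1 * (fa * fJ) = fa * f1 * (f0 * fJ) by ring.
  by rewrite E1 E2.
rewrite ler_pM2r ?mulr_gt0 //.
by rewrite leNgt Hx.
Qed.

Theorem mainTheorem8 (R : realFieldType) (V : finType) (F : cfg V -> R) :
  signature F ->
  ~ logsupermodular F ->
  (forall (D : {set V}) (p : cfg (dom_t D)),
      D != set0 -> logsupermodular (pinning F p)) ->
  exists x : cfg V, forall y : cfg V, F y != 0 ->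
    [|| y == czero V, y == x, y == ccompl x | y == cone V].
Proof.
move=> HF HL Hpin.
have [x [y Hxy]] : exists x y, F (cmeet x y) * F (cjoin x y) < F x * F y.
  case: (boolP [exists x, exists y, F (cmeet x y) * F (cjoin x y) < F x * F y]).
    by move=> /existsP [x /existsP [y H]]; exists x, y.
  move=> H; exfalso; apply: HL => x y; move: H.
  rewrite negb_exists => /forallP/(_ x); rewrite negb_exists => /forallP/(_ y).
  by rewrite -leNgt.
have ey : y = ccompl x.
  apply/eqP; apply/negPn/negP => hy.
  have [v hv] := neq_compl _ _ _ hy.
  have := pair_lsm _ _ _ Hpin _ _ _ (esym hv).
  by rewrite leNgt Hxy.
subst y.
have e0 : cmeet x (ccompl x) = czero V by apply/ffunP=> v; rewrite !ffunE andbN.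
have e1 : cjoin x (ccompl x) = cone V by apply/ffunP=> v; rewrite !ffunE orbN.
rewrite e0 e1 in Hxy.
exists x => z Fz.
have Hz : 0 < F z by rewrite lt0r Fz HF.
have ez : z = cjoin (cmeet z x) (cmeet z (ccompl x)).
  by apply/ffunP=> v; rewrite !ffunE; case: (z v); case: (x v).
case: (boolP (cmeet z x == czero V)) => ha0; last first.
  case: (boolP (cmeet z x == x)) => hax; last first.
    by exfalso; apply: (key _ _ _ HF Hpin _ _ Hxy Hz ha0 hax).
  case: (boolP (cmeet z (ccompl x) == czero V)) => hb0; last first.
    case: (boolP (cmeet z (ccompl x) == ccompl x)) => hbx; last first.
      exfalso; apply: (key _ _ _ HF Hpin (ccompl x) z _ Hz hb0 hbx).
      by rewrite ccomplK [F (ccompl x) * _]mulrC.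
    rewrite ez (eqP hax) (eqP hbx); apply/orP; right; apply/orP; right; apply/orP; right.
    by apply/eqP/ffunP=> v; rewrite !ffunE orbN.
  rewrite ez (eqP hax) (eqP hb0); apply/orP; right; apply/orP; left.
  by apply/eqP/ffunP=> v; rewrite !ffunE orbF.
case: (boolP (cmeet z (ccompl x) == czero V)) => hb0; last first.
  case: (boolP (cmeet z (ccompl x) == ccompl x)) => hbx; last first.
    exfalso; apply: (key _ _ _ HF Hpin (ccompl x) z _ Hz hb0 hbx).
    by rewrite ccomplK [F (ccompl x) * _]mulrC.
  rewrite ez (eqP ha0) (eqP hbx); apply/orP; right; apply/orP; right; apply/orP; left.
  by apply/eqP/ffunP=> v; rewrite !ffunE.
rewrite ez (eqP ha0) (eqP hb0); apply/orP; left.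
by apply/eqP/ffunP=> v; rewrite !ffunE.
Qed.
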